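(* Let $S\subseteq\mathbb{N}^d$ be a GNS. Then $\tau(S)\le t(S)$, and $\tau(S)=t(S)$ holds if and only if for every $x\in\mathcal{H}(S)$ there exists a Frobenius allowable gap $F$ of $S$ with $F-x\in S$.
   Context: $\mathbb{N}=\{0,1,2,\dots\}$. A GNS is a submonoid $S\subseteq\mathbb{N}^d$ with finite complement $\mathcal{H}(S)=\mathbb{N}^d\setminus S$ (gaps). A relaxed monomial order is a total order $\prec$ on $\mathbb{N}^d$ with (i) $v\prec w\Rightarrow v\prec w+u$ for all $u\in\mathbb{N}^d$, (ii) $0\prec v$ for all $v\neq 0$. A gap is Frobenius allowable if it equals $\max_\prec\mathcal{H}(S)$ for some relaxed monomial order $\prec$; $FA(S)$ denotes the set of Frobenius allowable gaps and $\tau(S)=|FA(S)|$. A gap $P$ is pseudo-Frobenius if $P+s\in S$ for all nonzero $s\in S$; $PF(S)$ is the set of these and $t(S)=|PF(S)|$ is the type. The condition $F-x\in S$ means $F-x\in\mathbb{N}^d$ and lies in $S$. *)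

(* Defs.v *)
From mathcomp Require Import all_boot.
From mathcomp Require Import finmap.
From mathcomp Require Import boolp classical_sets cardinality.
Set Implicit Arguments. Unset Strict Implicit. Unset Printing Implicit Defensive.

Definition vec (d : nat) := {ffun 'I_d -> nat}.

Definition vzero (d : nat) : vec d := [ffun _ => 0%N].
Definition vadd (d : nat) (v w : vec d) : vec d := [ffun i => (v i + w i)%N].

(* componentwise difference F - x, meaningful when x <= F componentwise *)
Definition vle (d : nat) (x F : vec d) : Prop := forall i, (x i <= F i)%N.
Definition vsub (d : nat) (F x : vec d) : vec d := [ffun i => (F i - x i)%N].

Definition is_GNS (d : nat) (S : set (vec d)) : Prop :=
  S (vzero d) /\ (forall v w, S v -> S w -> S (vadd v w)) /\
  finite_set (~` S).

Definition gaps (d : nat) (S : set (vec d)) : set (vec d) := ~` S.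

Definition relaxed_monomial_order (d : nat) (lt : vec d -> vec d -> Prop) : Prop :=
  (forall v, ~ lt v v) /\
  (forall u v w, lt u v -> lt v w -> lt u w) /\
  (forall v w, v <> w -> lt v w \/ lt w v) /\
  (forall v w u, lt v w -> lt v (vadd w u)) /\
  (forall v, v <> vzero d -> lt (vzero d) v).

Definition is_max_gap (d : nat) (lt : vec d -> vec d -> Prop)
    (S : set (vec d)) (F : vec d) : Prop :=
  gaps S F /\ (forall g, gaps S g -> g <> F -> lt g F).

Definition FA (d : nat) (S : set (vec d)) : set (vec d) :=
  [set F | exists lt, relaxed_monomial_order lt /\ is_max_gap lt S F].

Definition PF (d : nat) (S : set (vec d)) : set (vec d) :=
  [set P | gaps S P /\ (forall s, S s -> s <> vzero d -> S (vadd P s))].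

Definition tau (d : nat) (S : set (vec d)) : nat := #|` fset_set (FA S)|.
Definition type_t (d : nat) (S : set (vec d)) : nat := #|` fset_set (PF S)|.

(* "F - x in S": F - x lies in N^d and belongs to S *)
Definition diff_in (d : nat) (S : set (vec d)) (F x : vec d) : Prop :=
  vle x F /\ S (vsub F x).

(* Main.v *)
Require Import Defs.
From mathcomp Require Import all_boot.
From mathcomp Require Import finmap.
From mathcomp Require Import boolp classical_sets cardinality.
From mathcomp Require Import zify.
Set Implicit Arguments. Unset Strict Implicit. Unset Printing Implicit Defensive.

Local Open Scope classical_set_scope.

Lemma vadd_sub d (x F : vec d) : vle x F -> vadd x (vsub F x) = F.
Proof. by move=> H; apply/ffunP => i; rewrite !ffunE subnKC. Qed.

Lemma vadd_eq_l d (F s : vec d) : vadd F s = F -> s = vzero d.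
Proof.
move=> H; apply/ffunP => i; have := congr1 (fun f : vec d => f i) H.
rewrite !ffunE => E; apply/eqP; rewrite -(eqn_add2l (F i)) addn0; apply/eqP; exact: E.
Qed.

Lemma FA_sub_PF d (S : set (vec d)) : FA S `<=` PF S.
Proof.
move=> F [lt [[irr [tr [tot [ax1 ax0]]]] [gF mF]]]; split => // s Ss s0.
apply: contrapT => nS.
have hne : vadd F s <> F by move=> /vadd_eq_l.
have h1 := mF _ nS hne.
have := ax1 _ _ s h1; exact: irr.
Qed.

Lemma fin_gaps d (S : set (vec d)) : is_GNS S -> finite_set (gaps S).
Proof. by case=> _ []. Qed.

Definition sm d (g : vec d) := (\sum_(i < d) g i)%N.

Lemma sm_add d (g s : vec d) : sm (vadd g s) = (sm g + sm s)%N.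
Proof. by rewrite /sm -big_split /=; apply: eq_bigr => i _; rewrite ffunE. Qed.

Lemma sm_pos d (s : vec d) : s <> vzero d -> (0 < sm s)%N.
Proof.
move=> hs.
have [i hi] : exists i, s i <> 0%N.
  apply: contrapT => /forallNP H; apply: hs; apply/ffunP => i.
  by rewrite ffunE; apply: contrapT; apply: H.
rewrite /sm (bigD1 i) //=; lia.
Qed.

Lemma exists_PF d (S : set (vec d)) (hS : is_GNS S) x :
  gaps S x -> exists P, PF S P /\ diff_in S P x.
Proof.
move=> gx.
pose T := [set g | gaps S g /\ diff_in S g x].
have finT : finite_set T.
  by apply: (sub_finite_set _ (fin_gaps hS)) => g [].
pose B := (\max_(h <- fset_set T) sm h)%N.
have bnd : forall g, T g -> (sm g <= B)%N.
  move=> g Tg; apply: leq_bigmax_seq => //.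
  by rewrite in_fset_set // inE.
have step : forall g, T g -> ~ PF S g -> exists g', T g' /\ (sm g < sm g')%N.
  move=> g [gg [le_xg Sgx]] nP.
  have [s [Ss [s0 nS]]] : exists s, S s /\ s <> vzero d /\ ~ S (vadd g s).
    apply: contrapT => H; apply: nP; split => // s Ss s0.
    apply: contrapT => nS; apply: H; by exists s.
  exists (vadd g s); split; last by rewrite sm_add; have := sm_pos s0; lia.
  split => //; split.
    by move=> i; rewrite ffunE; have := le_xg i; lia.
  have -> : vsub (vadd g s) x = vadd (vsub g x) s.
    by apply/ffunP => i; rewrite !ffunE; have := le_xg i; lia.
  by case: hS => _ [hadd _]; apply: hadd.
have main : forall k g, T g -> (B - sm g <= k)%N ->
    exists P, PF S P /\ diff_in S P x.
  elim=> [|k IH] g Tg Hk; (have [Pg|nPg] := pselect (PF S g);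
    [by exists g; split => //; case: Tg|]);
    have [g' [Tg' lt']] := step _ Tg nPg; have := bnd _ Tg'.
    lia.
  by move=> b'; apply: (IH g') => //; lia.
have Tx : T x.
  split => //; split; first by move=> i.
  have -> : vsub x x = vzero d by apply/ffunP => i; rewrite !ffunE subnn.
  by case: hS.
exact: (main _ _ Tx (leqnn _)).
Qed.

Theorem theorem3p1 (d : nat) (S : set (vec d)) (hS : is_GNS S) :
  (tau S <= type_t S)%N /\
  (tau S = type_t S <->
     (forall x, gaps S x -> exists F, FA S F /\ diff_in S F x)).
Proof.
have finPF : finite_set (PF S).
  by apply: (sub_finite_set _ (fin_gaps hS)) => g [].
have sub := @FA_sub_PF d S.
have finFA : finite_set (FA S) by apply: sub_finite_set sub finPF.
have fsub : (fset_set (FA S) `<=` fset_set (PF S))%fset.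
  by rewrite -fset_set_sub.
split; first exact: fsubset_leq_card.
split.
- move=> E x gx.
  have EE : FA S = PF S.
    apply: fset_set_inj => //; apply/eqP.
    by rewrite -(fsubset_leqif_cards fsub).2; apply/eqP.
  by rewrite EE; apply: exists_PF.
- move=> H; rewrite /tau /type_t; congr (#|` _|); congr fset_set.
  apply/seteqP; split => // P PP.
  have [F [FAF [leF SF]]] := H P PP.1.
  have PFF := sub _ FAF.
  have [e|ne] := pselect (vsub F P = vzero d).
    have -> : P = F.
      apply/ffunP => i; have := congr1 (fun f : vec d => f i) e; rewrite !ffunE.
      have := leF i; move=> LE E; apply/eqP; rewrite eqn_leq LE /=; rewrite -subn_eq0; apply/eqP; exact: E.
    exact: FAF.
  exfalso; apply: PFF.1.
  by rewrite -(vadd_sub leF); apply: PP.2.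
Qed.
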